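(* The sets $G(z^* )$ and $-G(z^* )=\{-u: u\in G(z^* )\}$ are disjoint, and the following three sets coincide: (i) $G(z^* )\cup(-G(z^* ))$; (ii) the orbit of $z^*$ under $\mathrm{Aut}_{\mathbb Z}(L^* )$; (iii) the orbit of $z^*$ under $\mathrm{AAut}_{\mathbb Z}(L^* )=\mathrm{Isom}_{\mathbb Z}(L^* )$.
   Context: $\mathbb F$ is a field of characteristic zero, $\mathfrak{sl}_2$ the Lie algebra of $2\times2$ trace-zero matrices over $\mathbb F$ with trace form $(u,v)=\mathrm{tr}(uv)$. Let $x^*=\begin{pmatrix}1&-1\\1&-1\end{pmatrix}$, $y^*=\begin{pmatrix}0&0\\1&0\end{pmatrix}$, $z^*=\begin{pmatrix}0&-1\\0&0\end{pmatrix}$, $L^*=\mathbb Zx^*\oplus\mathbb Zy^*\oplus\mathbb Zz^*$. $G$ is the subgroup of $\mathrm{Aut}_{\mathbb F}(\mathfrak{sl}_2)$ generated by $\exp(\mathrm{ad}\,x^* ),\exp(\mathrm{ad}\,y^* ),\exp(\mathrm{ad}\,z^* )$. An antiautomorphism is an $\mathbb F$-linear bijection $\phi$ with $\phi([u,v])=[\phi(v),\phi(u)]$; an isometry is an $\mathbb F$-linear bijection preserving the trace form. $\mathrm{Aut}_{\mathbb Z}(L^* )$, $\mathrm{AAut}_{\mathbb Z}(L^* )$, $\mathrm{Isom}_{\mathbb Z}(L^* )$ are respectively the groups of automorphisms, of automorphisms and antiautomorphisms, and of isometries $\varphi$ of $\mathfrak{sl}_2$ with $\varphi(L^* )=L^*$.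 *)

(* Defs.v *)
From HB Require Import structures.
From mathcomp Require Import all_boot all_order all_algebra.
Set Implicit Arguments. Unset Strict Implicit. Unset Printing Implicit Defensive.
Import Order.TTheory GRing.Theory Num.Theory.
Local Open Scope ring_scope.

Section SL2.
Variable F : fieldType.

Definition mx2 (a b c d : F) : 'M[F]_2 :=
  \matrix_(i < 2, j < 2)
    if (i == 0 :> nat) then (if (j == 0 :> nat) then a else b)
    else (if (j == 0 :> nat) then c else d).

Definition sl2 (u : 'M[F]_2) : Prop := \tr u = 0.

Definition lie (u v : 'M[F]_2) : 'M[F]_2 := u * v - v * u.
Definition ad (a : 'M[F]_2) (u : 'M[F]_2) : 'M[F]_2 := lie a u.

(* exp(ad a) = sum_k (ad a)^k / k! ; used only for a with ad a nilpotent on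
   the 3-dimensional space sl_2, where (ad a)^3 = 0, so the sum stops at k=2. *)
Definition exp_ad (a : 'M[F]_2) (u : 'M[F]_2) : 'M[F]_2 :=
  \sum_(k < 3) (k`!%:R)^-1 *: iter k (ad a) u.

Definition xs : 'M[F]_2 := mx2 1 (-1) 1 (-1).
Definition ys : 'M[F]_2 := mx2 0 0 1 0.
Definition zs : 'M[F]_2 := mx2 0 (-1) 0 0.

Definition Lstar (u : 'M[F]_2) : Prop :=
  exists a b c : int, u = a%:~R *: xs + b%:~R *: ys + c%:~R *: zs.

Definition mapT := 'M[F]_2 -> 'M[F]_2.

Definition inverse_on_sl2 (g h : 'M[F]_2 -> 'M[F]_2) : Prop :=
  (forall u, sl2 u -> sl2 (h u)) /\
  (forall u, sl2 u -> h (g u) = u) /\ (forall u, sl2 u -> g (h u) = u).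

(* G: subgroup of Aut(sl_2) generated by exp(ad xs), exp(ad ys), exp(ad zs)
   (maps are considered through their action on sl_2). *)
Inductive Ggen : mapT -> Prop :=
  | Ggen_id : Ggen id
  | Ggen_x : Ggen (exp_ad xs)
  | Ggen_y : Ggen (exp_ad ys)
  | Ggen_z : Ggen (exp_ad zs)
  | Ggen_comp g h : Ggen g -> Ggen h -> Ggen (g \o h)
  | Ggen_inv g h : Ggen g -> inverse_on_sl2 g h -> Ggen h.

Definition lin_bij_sl2 (phi : 'M[F]_2 -> 'M[F]_2) : Prop :=
  (forall u, sl2 u -> sl2 (phi u)) /\
  (forall (a : F) u v, sl2 u -> sl2 v -> phi (a *: u + v) = a *: phi u + phi v) /\
  (forall u v, sl2 u -> sl2 v -> phi u = phi v -> u = v) /\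
  (forall v, sl2 v -> exists2 u, sl2 u & phi u = v).

Definition is_aut (phi : 'M[F]_2 -> 'M[F]_2) : Prop :=
  lin_bij_sl2 phi /\
  forall u v, sl2 u -> sl2 v -> phi (lie u v) = lie (phi u) (phi v).

Definition is_antiaut (phi : 'M[F]_2 -> 'M[F]_2) : Prop :=
  lin_bij_sl2 phi /\
  forall u v, sl2 u -> sl2 v -> phi (lie u v) = lie (phi v) (phi u).

Definition is_isom (phi : 'M[F]_2 -> 'M[F]_2) : Prop :=
  lin_bij_sl2 phi /\
  forall u v, sl2 u -> sl2 v -> \tr (phi u * phi v) = \tr (u * v).

Definition preserves_Lstar (phi : 'M[F]_2 -> 'M[F]_2) : Prop :=
  (forall u, Lstar u -> Lstar (phi u)) /\
  (forall v, Lstar v -> exists2 u, Lstar u & phi u = v).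

Definition AutZ phi := is_aut phi /\ preserves_Lstar phi.
Definition AAutZ phi := (is_aut phi \/ is_antiaut phi) /\ preserves_Lstar phi.
Definition IsomZ phi := is_isom phi /\ preserves_Lstar phi.

Definition orbit_zs (S : ('M[F]_2 -> 'M[F]_2) -> Prop) (u : 'M[F]_2) : Prop :=
  exists2 phi, S phi & phi zs = u.

End SL2.

(* Main.v *)
From HB Require Import structures.
From mathcomp Require Import all_boot all_order all_algebra.
From Stdlib Require Import Ring.
Require Import Defs.
Set Implicit Arguments. Unset Strict Implicit. Unset Printing Implicit Defensive.
Import GRing.Theory Num.Theory.
Local Open Scope ring_scope.
Definition iadd (x y : int) : int := x + y.
Definition imul (x y : int) : int := x * y.
Definition iopp (x : int) : int := - x.
Definition isub (x y : int) : int := x - y.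
Definition izero : int := 0.
Definition ione : int := 1.
Lemma IRT : @ring_theory int izero ione iadd imul isub iopp eq.
Proof.
rewrite /iadd /imul /isub /iopp /izero /ione.
split=> //; [exact: add0r|exact: addrC|exact: addrA|exact: mul1r|exact: mulrC|exact: mulrA|exact: mulrDl|exact: subrr].
Qed.
Add Ring Ir : IRT.
Lemma iaddE (x y : int) : x + y = iadd x y. Proof. by []. Qed.
Lemma imulE (x y : int) : x * y = imul x y. Proof. by []. Qed.
Lemma ioppE (x : int) : - x = iopp x. Proof. by []. Qed.
Lemma i0E : (0 : int) = izero. Proof. by []. Qed.
Lemma i1E : (1 : int) = ione. Proof. by []. Qed.
Ltac iring := rewrite ?iaddE ?imulE ?ioppE ?i0E ?i1E; match goal with |- ?a = ?b => change (@eq int a b) end; ring.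
Lemma itest (a b : int) : (a + b) * (a - b) = a * a - b * b.
Proof. iring. Qed.

Section S.
Variable F : fieldType.
Definition FT := GRing.PzSemiRing.sort F.
Definition fadd (x y : F) : FT := x + y.
Definition fmul (x y : F) : FT := x * y.
Definition fopp (x : F) : FT := - x.
Definition fsub (x y : F) : FT := x - y.
Definition fzero : FT := 0.
Definition fone : FT := 1.
Lemma RT : @ring_theory FT fzero fone fadd fmul fsub fopp eq.
Proof.
rewrite /fadd /fmul /fsub /fopp /fzero /fone.
split=> //; [exact: add0r|exact: addrC|exact: addrA|exact: mul1r|exact: mulrC|exact: mulrA|exact: mulrDl|exact: subrr].
Qed.
Add Ring Fr : RT.
Lemma faddE (x y : F) : x + y = fadd x y. Proof. by []. Qed.
Lemma fmulE (x y : F) : x * y = fmul x y. Proof. by []. Qed.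
Lemma foppE (x : F) : - x = fopp x. Proof. by []. Qed.
Lemma f0E : (0 : F) = fzero. Proof. by []. Qed.
Lemma f1E : (1 : F) = fone. Proof. by []. Qed.
Ltac fring := repeat match goal with |- context [@intmul ?R ?one ?n] => let x := fresh "x" in generalize (@intmul R one n : FT) => x end; rewrite ?faddE ?fmulE ?foppE ?f0E ?f1E; match goal with |- ?a = ?b => change (@eq FT a b) end; ring.

Notation mx2 := (@mx2 F).
Lemma mx2_eta (u : 'M[F]_2) : u = mx2 (u 0 0) (u 0 1) (u 1 0) (u 1 1).
Proof.
apply/matrixP => i j; rewrite mxE.
by case: i => [[|[|i]] Hi]; case: j => [[|[|j]] Hj] //=;
  congr (u _ _); apply: val_inj.
Qed.
Lemma mx2_eq a b c d a' b' c' d' :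
  a = a' -> b = b' -> c = c' -> d = d' -> mx2 a b c d = mx2 a' b' c' d'.
Proof. by move=> -> -> -> ->. Qed.
Lemma mx2E a b c d : (mx2 a b c d 0 0 = a) * (mx2 a b c d 0 1 = b) *
   (mx2 a b c d 1 0 = c) * (mx2 a b c d 1 1 = d).
Proof. by rewrite !mxE. Qed.
Lemma mx2_mul a b c d a' b' c' d' :
  mx2 a b c d * mx2 a' b' c' d' =
  mx2 (a * a' + b * c') (a * b' + b * d') (c * a' + d * c') (c * b' + d * d').
Proof.
apply/matrixP => i j; rewrite -mulmxE !mxE !big_ord_recl big_ord0 !mxE /=.
by case: i => [[|[|i]] Hi]; case: j => [[|[|j]] Hj] //=; rewrite addr0.
Qed.
Lemma mx2_add a b c d a' b' c' d' :
  mx2 a b c d + mx2 a' b' c' d' = mx2 (a + a') (b + b') (c + c') (d + d').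
Proof.
apply/matrixP => i j; rewrite !mxE.
by case: i => [[|[|i]] Hi]; case: j => [[|[|j]] Hj].
Qed.
Lemma mx2_opp a b c d : - mx2 a b c d = mx2 (- a) (- b) (- c) (- d).
Proof.
apply/matrixP => i j; rewrite !mxE.
by case: i => [[|[|i]] Hi]; case: j => [[|[|j]] Hj].
Qed.
Lemma mx2_scale k a b c d : k *: mx2 a b c d = mx2 (k * a) (k * b) (k * c) (k * d).
Proof.
apply/matrixP => i j; rewrite !mxE.
by case: i => [[|[|i]] Hi]; case: j => [[|[|j]] Hj].
Qed.
Lemma mx2_tr a b c d : \tr (mx2 a b c d) = a + d.
Proof. by rewrite /mxtrace !big_ord_recl big_ord0 !mxE /= addr0. Qed.
Lemma mx2_0 : (0 : 'M[F]_2) = mx2 0 0 0 0.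
Proof. by apply/matrixP => i j; rewrite !mxE; case: i => [[|[|i]] Hi]; case: j => [[|[|j]] Hj]. Qed.
Lemma mx2_1 : (1 : 'M[F]_2) = mx2 1 0 0 1.
Proof. by apply/matrixP => i j; rewrite !mxE; case: i => [[|[|i]] Hi]; case: j => [[|[|j]] Hj]. Qed.
Lemma mx2_inj a b c d a' b' c' d' : mx2 a b c d = mx2 a' b' c' d' ->
  [/\ a = a', b = b', c = c' & d = d'].
Proof.
move=> E; have E1 := congr1 (fun m : 'M[F]_2 => m 0 0) E.
have E2 := congr1 (fun m : 'M[F]_2 => m 0 1) E.
have E3 := congr1 (fun m : 'M[F]_2 => m 1 0) E.
have E4 := congr1 (fun m : 'M[F]_2 => m 1 1) E.
by move: E1 E2 E3 E4; rewrite /= !mxE /=.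
Qed.

Ltac mxsimp := repeat (rewrite mx2_mul || rewrite mx2_add || rewrite mx2_opp || rewrite mx2_scale || rewrite mx2_tr).
Ltac mxring := mxsimp; apply: mx2_eq; fring.
Ltac eta u := rewrite [u]mx2_eta.

Definition phi (a b c d : F) (u : 'M[F]_2) : 'M[F]_2 :=
  (a * d - b * c) *: (mx2 a b c d * u * mx2 d (- b) (- c) a).

Lemma phi_comp a b c d a' b' c' d' u :
  phi a b c d (phi a' b' c' d' u) =
  phi (a * a' + b * c') (a * b' + b * d') (c * a' + d * c') (c * b' + d * d') u.
Proof. eta u; rewrite /phi; mxring. Qed.
Lemma phi_inv a b c d u :
  phi d (- b) (- c) a (phi a b c d u) = ((a * d - b * c) * (a * d - b * c) * ((a * d - b * c) * (a * d - b * c))) *: u.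
Proof. eta u; rewrite /phi; mxring. Qed.
Lemma phi_inv' a b c d u :
  phi a b c d (phi d (- b) (- c) a u) = ((a * d - b * c) * (a * d - b * c) * ((a * d - b * c) * (a * d - b * c))) *: u.
Proof. eta u; rewrite /phi; mxring. Qed.
Lemma phi_lie a b c d u v :
  lie (phi a b c d u) (phi a b c d v) = ((a * d - b * c) * (a * d - b * c)) *: phi a b c d (lie u v).
Proof. eta u; eta v; rewrite /phi /lie; mxring. Qed.
Lemma phi_trm a b c d u v :
  \tr (phi a b c d u * phi a b c d v) = ((a * d - b * c) * (a * d - b * c) * ((a * d - b * c) * (a * d - b * c))) * \tr (u * v).
Proof. eta u; eta v; rewrite /phi; mxsimp; fring. Qed.
Lemma phi_tr a b c d u :
  \tr (phi a b c d u) = ((a * d - b * c) * (a * d - b * c)) * \tr u.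
Proof. eta u; rewrite /phi; mxsimp; fring. Qed.
Lemma phi_lin a b c d k u v :
  phi a b c d (k *: u + v) = k *: phi a b c d u + phi a b c d v.
Proof. eta u; eta v; rewrite /phi; mxring. Qed.
End S.


Section S2.
Variable F : fieldType.
Add Ring Fr2 : (@RT F).
Ltac fring2 := repeat match goal with |- context [@intmul ?R ?one ?n] => let x := fresh "x" in generalize (@intmul R one n : (FT F)) => x end; rewrite ?faddE ?fmulE ?foppE ?f0E ?f1E; match goal with |- ?a = ?b => change (@eq (FT F) a b) end; ring.
Ltac mxsimp2 := repeat (rewrite mx2_mul || rewrite mx2_add || rewrite mx2_opp || rewrite mx2_scale || rewrite mx2_tr).
Ltac mxring2 := mxsimp2; apply: mx2_eq; fring2.
Ltac eta2 u := rewrite [u]mx2_eta.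
Ltac icast2 := repeat (rewrite intrD || rewrite intrN || rewrite intrM).
Notation mx2 := (@mx2 F).
Notation phi := (@phi F).
Notation xs := (@xs F). Notation ys := (@ys F). Notation zs := (@zs F).

Lemma z0 : ((0 : int)%:~R : F) = 0. Proof. by []. Qed.
Lemma z1 : ((1 : int)%:~R : F) = 1. Proof. by []. Qed.
Definition phiZ (a b c d : int) := phi a%:~R b%:~R c%:~R d%:~R.
Lemma detZ (a b c d : int) : (a%:~R * d%:~R - b%:~R * c%:~R : F) = (a*d - b*c)%:~R.
Proof. by rewrite intrB !intrM. Qed.
Lemma sl2E (u : 'M[F]_2) : sl2 u <-> u 0 0 + u 1 1 = 0.
Proof. by rewrite /sl2 [u]mx2_eta mx2_tr !mxE. Qed.

Section Det.
Variables a b c d : int.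
Hypothesis H : (a*d - b*c)*(a*d - b*c) = 1.
Lemma eF : (a%:~R * d%:~R - b%:~R * c%:~R) * (a%:~R * d%:~R - b%:~R * c%:~R) = 1 :> F.
Proof. by rewrite detZ -intrM H. Qed.
Lemma phiZ_inv u : phiZ d (-b) (-c) a (phiZ a b c d u) = u.
Proof. by rewrite /phiZ !intrN phi_inv eF mulr1 scale1r. Qed.
Lemma phiZ_inv' u : phiZ a b c d (phiZ d (-b) (-c) a u) = u.
Proof. by rewrite /phiZ !intrN phi_inv' eF mulr1 scale1r. Qed.
End Det.
Lemma phiZ_sl2 a b c d u : sl2 u -> sl2 (phiZ a b c d u).
Proof. by rewrite /sl2 /phiZ phi_tr => ->; rewrite mulr0. Qed.
Lemma phiZ_lin a b c d k u v : phiZ a b c d (k *: u + v) = k *: phiZ a b c d u + phiZ a b c d v.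
Proof. exact: phi_lin. Qed.
Lemma phiZ_comp a b c d a' b' c' d' u :
  phiZ a b c d (phiZ a' b' c' d' u) =
  phiZ (a * a' + b * c') (a * b' + b * d') (c * a' + d * c') (c * b' + d * d') u.
Proof. by rewrite /phiZ phi_comp !intrD !intrM. Qed.

Lemma phiZ_bij a b c d : (a*d - b*c)*(a*d - b*c) = 1 -> lin_bij_sl2 (phiZ a b c d).
Proof.
move=> H; split; first exact: phiZ_sl2.
split; first by move=> k u v _ _; exact: phiZ_lin.
split.
  move=> u v _ _ E; by rewrite -(phiZ_inv H u) E phiZ_inv.
move=> v Hv; exists (phiZ d (-b) (-c) a v); first exact: phiZ_sl2.
exact: phiZ_inv'.
Qed.
Lemma phiZ_aut a b c d : (a*d - b*c)*(a*d - b*c) = 1 -> is_aut (phiZ a b c d).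
Proof.
move=> H; split; first exact: phiZ_bij.
by move=> u v _ _; rewrite /phiZ phi_lie eF // scale1r.
Qed.
Lemma phiZ_isom a b c d : (a*d - b*c)*(a*d - b*c) = 1 -> is_isom (phiZ a b c d).
Proof.
move=> H; split; first exact: phiZ_bij.
by move=> u v _ _; rewrite /phiZ phi_trm eF // mulr1 mul1r.
Qed.
Lemma LstarE (u : 'M[F]_2) : Lstar u <-> exists p q r : int, u = mx2 p%:~R q%:~R r%:~R (-p)%:~R.
Proof.
split.
  case=> a [b] [c] ->; exists a, (-a - c), (a + b).
  rewrite /xs /ys /zs; mxsimp2; apply: mx2_eq; icast2; fring2.
case=> p [q] [r] ->; exists p, (r - p), (-p - q).
rewrite /xs /ys /zs; mxsimp2; apply: mx2_eq; icast2; fring2.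
Qed.
Lemma phiZ_L a b c d u : Lstar u -> Lstar (phiZ a b c d u).
Proof.
move/LstarE=> [p [q [r ->]]]; apply/LstarE.
exists ((a * d - b * c) * (a * p * d + b * r * d - a * q * c + b * p * c)),
  ((a * d - b * c) * (a * a * q - b * b * r - a * b * p - a * b * p)),
  ((a * d - b * c) * (c * p * d + c * d * p + d * d * r - c * c * q)).
rewrite /phiZ /phi; mxsimp2; apply: mx2_eq; icast2; fring2.
Qed.
Lemma phiZ_pres a b c d : (a*d - b*c)*(a*d - b*c) = 1 -> preserves_Lstar (phiZ a b c d).
Proof.
move=> H; split; first exact: phiZ_L.
move=> v Hv; exists (phiZ d (-b) (-c) a v); first exact: phiZ_L.
exact: phiZ_inv'.
Qed.

Lemma exp_adE (a u : 'M[F]_2) : exp_ad a u = u + lie a u + (2%:R)^-1 *: lie a (lie a u).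
Proof.
rewrite /exp_ad !big_ord_recl big_ord0 /=.
have -> : (bump 0 0) = 1%N by [].
have -> : (bump 0 1) = 2%N by [].
have -> : (0`!)%:R = 1 :> F by [].
by rewrite invr1 !scale1r addr0 addrA /ad.
Qed.
Lemma lie2 (a u : 'M[F]_2) : a * a = 0 -> lie a (lie a u) = 2%:R *: (- (a * u * a)).
Proof.
move=> Ha; rewrite /lie mulrBr mulrBl !mulrA Ha mul0r -[u * a * a]mulrA Ha mulr0 subr0 sub0r.
by rewrite scaler_nat mulr2n.
Qed.
Lemma exp_ad_nil (a u : 'M[F]_2) : (2%:R : F) != 0 -> a * a = 0 ->
  exp_ad a u = u + lie a u - a * u * a.
Proof.
move=> H2 Ha; by rewrite exp_adE lie2 // scalerA mulVf // scale1r.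
Qed.
Lemma xs2 : xs * xs = 0 :> 'M[F]_2.
Proof. rewrite /xs mx2_0; mxring2. Qed.
Lemma ys2 : ys * ys = 0 :> 'M[F]_2.
Proof. rewrite /ys mx2_0; mxring2. Qed.
Lemma zs2 : zs * zs = 0 :> 'M[F]_2.
Proof. rewrite /zs mx2_0; mxring2. Qed.
Lemma exp_ad_x u : (2%:R : F) != 0 -> exp_ad xs u = phiZ (1 + 1) (-1) 1 0 u.
Proof.
move=> H2; rewrite exp_ad_nil // ?xs2 //; eta2 u; rewrite /xs /lie /phiZ /phi; icast2; rewrite ?z0 ?z1; mxring2.
Qed.
Lemma exp_ad_y u : (2%:R : F) != 0 -> exp_ad ys u = phiZ 1 0 1 1 u.
Proof.
move=> H2; rewrite exp_ad_nil // ?ys2 //; eta2 u; rewrite /ys /lie /phiZ /phi; icast2; rewrite ?z0 ?z1; mxring2.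
Qed.
Lemma exp_ad_z u : (2%:R : F) != 0 -> exp_ad zs u = phiZ 1 (-1) 0 1 u.
Proof.
move=> H2; rewrite exp_ad_nil // ?zs2 //; eta2 u; rewrite /zs /lie /phiZ /phi; icast2; rewrite ?z0 ?z1; mxring2.
Qed.
Lemma phiZ_id u : phiZ 1 0 0 1 u = u.
Proof. eta2 u; rewrite /phiZ /phi ?z0 ?z1; mxring2. Qed.

Lemma Ggen_phi (g : 'M[F]_2 -> 'M[F]_2) : (2%:R : F) != 0 -> Ggen g ->
  exists a b c d : int, a * d - b * c = 1 /\ forall u, sl2 u -> g u = phiZ a b c d u.
Proof.
move=> H2; elim.
- by exists 1, 0, 0, 1; split=> // u _; rewrite phiZ_id.
- by exists (1 + 1), (-1), 1, 0; split=> // u _; rewrite exp_ad_x.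
- by exists 1, 0, 1, 1; split=> // u _; rewrite exp_ad_y.
- by exists 1, (-1), 0, 1; split=> // u _; rewrite exp_ad_z.
- move=> g1 h1 _ [a [b [c [d [Hd Hg]]]]] _ [a' [b' [c' [d' [Hd' Hh]]]]].
  exists (a * a' + b * c'), (a * b' + b * d'), (c * a' + d * c'), (c * b' + d * d').
  split.
    have -> : (a * a' + b * c') * (c * b' + d * d') - (a * b' + b * d') * (c * a' + d * c')
       = (a * d - b * c) * (a' * d' - b' * c') by iring.
    by rewrite Hd Hd'.
  move=> u Hu /=; rewrite Hh // Hg ?phiZ_comp //; exact: phiZ_sl2.
- move=> g1 h1 _ [a [b [c [d [Hd Hg]]]]] [Hh1 [Hh2 Hh3]].
  exists d, (-b), (-c), a; split.
    by rewrite -Hd; iring.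
  have H1 : (a * d - b * c) * (a * d - b * c) = 1 by rewrite Hd.
  move=> u Hu.
  have Hw : sl2 (phiZ d (-b) (-c) a u) by exact: phiZ_sl2.
  by rewrite -{1}(phiZ_inv' H1 u) -Hg // Hh2.
Qed.

Lemma intr0 (charF0 : [pchar F] =i pred0) (n : int) : (n%:~R : F) = 0 -> n = 0.
Proof.
have HF := (pcharf0P F).1 charF0.
case: n => m.
  by rewrite -pmulrn => /eqP; rewrite HF => /eqP ->.
rewrite NegzE intrN -pmulrn => /eqP; rewrite oppr_eq0 HF.
done.
Qed.
Lemma intr_inj (charF0 : [pchar F] =i pred0) (m n : int) : (m%:~R : F) = n%:~R -> m = n.
Proof.
move=> E; apply/eqP; rewrite -subr_eq0; apply/eqP; apply: intr0 => //.
by rewrite intrB E subrr.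
Qed.
Lemma two_neq0 (charF0 : [pchar F] =i pred0) : (2%:R : F) != 0.
Proof. by rewrite ((pcharf0P F).1 charF0). Qed.
Lemma sqsum0 (x y : int) : x * x + y * y = 0 -> x = 0.
Proof.
move=> E; have hx := sqr_ge0 x; have hy := sqr_ge0 y; rewrite expr2 in hx hy.
by move/eqP: E; rewrite paddr_eq0 // mulf_eq0 orbb => /andP [/eqP].
Qed.
Lemma phiZ_zs a b c d : phiZ a b c d zs =
  (a * d - b * c)%:~R *: mx2 (a * c)%:~R (- (a * a))%:~R (c * c)%:~R (- (a * c))%:~R.
Proof. rewrite /phiZ /phi /zs; icast2; rewrite ?z0 ?z1; mxring2. Qed.
Lemma part1 (charF0 : [pchar F] =i pred0) (u : 'M[F]_2) :
  ~ (orbit_zs (@Ggen F) u /\ orbit_zs (@Ggen F) (- u)).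
Proof.
have H2 := two_neq0 charF0.
case=> [[g Hg gu] [h Hh hu]].
have [a [b [c [d [Hd Eg]]]]] := Ggen_phi H2 Hg.
have [a' [b' [c' [d' [Hd' Eh]]]]] := Ggen_phi H2 Hh.
have Hz : sl2 zs by rewrite /sl2 /zs mx2_tr addr0.
move: hu; rewrite -gu Eh // Eg // !phiZ_zs Hd Hd' !scale1r mx2_opp.
case/mx2_inj => _ E1 E2 _.
have Ec : c * c + c' * c' = 0.
  by apply: intr0 => //; rewrite intrD E2 subrr.
have Ea : a * a + a' * a' = 0.
  move: E1; rewrite !intrN opprK => E1.
  by apply: intr0 => //; rewrite intrD -E1 addNr.
move: Hd; rewrite (sqsum0 Ec) (sqsum0 Ea) mul0r mulr0 subrr.
done.
Qed.
End S2.


Import Order.TTheory.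
Lemma eq_by (X Y Z : int) : X - Y = Z -> Z = 0 -> X = Y.
Proof. by move=> E Z0; apply/eqP; rewrite -subr_eq0 E Z0. Qed.
Lemma ineq (x y s : int) : 0 < x -> x <= y -> 0 < s -> s * s = x * y -> x <= s.
Proof.
move=> hx hxy hs E; rewrite leNgt; apply/negP => hsx.
have h1 : s * s < x * x by apply: ltr_pM; rewrite ?ltW.
have h2 : x * x <= x * y by rewrite ler_pM2l.
by move: (lt_le_trans h1 h2); rewrite E ltxx.
Qed.
Lemma meas (x y : int) (n : nat) : y <= (n.+1)%:Z -> x < y -> x <= n%:Z.
Proof. by move=> h1 h2; rewrite -ltz1D -intS (lt_le_trans h2 h1). Qed.
Definition Prim (p q r : int) := forall k : int, (k %| p)%Z -> (k %| q)%Z -> (k %| r)%Z -> (k %| 1)%Z.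
Lemma dvdz_lin (k x y z a b c : int) : (k %| x)%Z -> (k %| y)%Z -> (k %| z)%Z -> (k %| a * x + b * y + c * z)%Z.
Proof. by move=> hx hy hz; rewrite !rpredD // dvdz_mull. Qed.
Lemma Prim_q (q : int) : q <= 0 -> Prim 0 q 0 -> q = -1.
Proof.
move=> hq H; have := H q (dvdz0 _) (dvdzz _) (dvdz0 _); rewrite dvdz1.
case: q hq {H} => n /=.
  by case: n => [|n] //=.
by case: n.
Qed.
Lemma Prim_r (r : int) : 0 <= r -> Prim 0 0 r -> r = 1.
Proof.
move=> hr H; have := H r (dvdz0 _) (dvdz0 _) (dvdzz _); rewrite dvdz1.
case: r hr {H} => n //=.
by move=> _ /eqP ->.
Qed.
Lemma eq_byN (X Y Z : int) : X - Y = - Z -> Z = 0 -> X = Y.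
Proof. by move=> E Z0; apply: (eq_by E); rewrite Z0 oppr0. Qed.
Lemma lt_by (X Y A B : int) : Y - X = A + B -> 0 <= A -> 0 < B -> X < Y.
Proof. by move=> E hA hB; rewrite -subr_gt0 E; apply: ltr_pwDr. Qed.
Lemma le0_by (Q R S : int) : 0 < R -> R * (- Q) = S * S -> Q <= 0.
Proof.
move=> hR E; rewrite -oppr_ge0 -(pmulr_rge0 _ hR) E.
by have := sqr_ge0 S; rewrite expr2.
Qed.
Lemma ge0_by (Q R S : int) : 0 < Q -> Q * R = S * S -> 0 <= R.
Proof.
move=> hQ E; rewrite -(pmulr_rge0 _ hQ) E.
by have := sqr_ge0 S; rewrite expr2.
Qed.

Section S3.
Variable F : fieldType.
Variable charF0 : [pchar F] =i pred0.
Add Ring Fr3 : (@RT F).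
Ltac fring3 := repeat match goal with |- context [@intmul ?R ?one ?n] => let x := fresh "x" in generalize (@intmul R one n : (FT F)) => x end; rewrite ?faddE ?fmulE ?foppE ?f0E ?f1E; match goal with |- ?a = ?b => change (@eq (FT F) a b) end; ring.
Ltac mxsimp3 := repeat (rewrite mx2_mul || rewrite mx2_add || rewrite mx2_opp || rewrite mx2_scale || rewrite mx2_tr).
Ltac mxring3 := mxsimp3; apply: mx2_eq; fring3.
Ltac eta3 u := rewrite [u]mx2_eta.
Ltac icast3 := repeat (rewrite intrD || rewrite intrN || rewrite intrM).
Notation mx2 := (@mx2 F).
Notation phi := (@phi F).
Notation phiZ := (@phiZ F).
Notation xs := (@xs F). Notation ys := (@ys F). Notation zs := (@zs F).
Definition Mz (p q r : int) := mx2 p%:~R q%:~R r%:~R (-p)%:~R.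
Notation Orb := (orbit_zs (@Ggen F)).
Lemma H2 : (2%:R : F) != 0. Proof. exact: two_neq0. Qed.

Lemma orbit_step v h w : Orb v -> Ggen h -> h v = w -> Orb w.
Proof. by case=> g Hg gv Hh hv; exists (h \o g); [exact: Ggen_comp | rewrite /= gv]. Qed.
Lemma G_Yi : Ggen (phiZ 1 0 (-1) 1).
Proof.
apply: (Ggen_inv (@Ggen_y F)); split; first by move=> u; exact: phiZ_sl2.
split=> u _; rewrite exp_ad_y ?H2 //; eta3 u; rewrite /phiZ /phi; icast3; rewrite ?z0 ?z1; mxring3.
Qed.
Lemma G_Zi : Ggen (phiZ 1 1 0 1).
Proof.
apply: (Ggen_inv (@Ggen_z F)); split; first by move=> u; exact: phiZ_sl2.
split=> u _; rewrite exp_ad_z ?H2 //; eta3 u; rewrite /phiZ /phi; icast3; rewrite ?z0 ?z1; mxring3.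
Qed.
Lemma base_zs : Orb (Mz 0 (-1) 0).
Proof. exists id; first exact: Ggen_id. by rewrite /Mz /zs; apply: mx2_eq => //; rewrite intrN. Qed.
Lemma base_ys : Orb (Mz 0 0 1).
Proof.
exists (exp_ad zs \o exp_ad ys); first by apply: Ggen_comp; [exact: Ggen_z | exact: Ggen_y].
rewrite /= exp_ad_y ?H2 // exp_ad_z ?H2 // /Mz /zs /phiZ /phi; icast3; rewrite ?z0 ?z1; mxring3.
Qed.

Lemma base_case p q r : q <= 0 -> 0 <= r -> p * p + q * r = 0 -> Prim p q r ->
  q = 0 \/ r = 0 -> Orb (Mz p q r).
Proof.
move=> hq hr hd hP [q0|r0].
  move: hd hP; rewrite q0 mul0r addr0 => /eqP; rewrite mulf_eq0 orbb => /eqP ->.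
  by move=> hP; rewrite (Prim_r hr hP); exact: base_ys.
move: hd hP; rewrite r0 mulr0 addr0 => /eqP; rewrite mulf_eq0 orbb => /eqP ->.
by move=> hP; rewrite (Prim_q hq hP); exact: base_zs.
Qed.

Lemma step (n : nat) p q r p' q' r' h :
  (forall p q r : int, r - q <= n%:Z -> q <= 0 -> 0 <= r -> p * p + q * r = 0 ->
      Prim p q r -> Orb (Mz p q r)) ->
  r' - q' < r - q -> r - q <= (n.+1)%:Z -> q' <= 0 -> 0 <= r' ->
  p' * p' + q' * r' = 0 -> Prim p' q' r' -> Ggen h -> h (Mz p' q' r') = Mz p q r ->
  Orb (Mz p q r).
Proof.
move=> IH hlt hm hq hr hd hP hG hE.
apply: (orbit_step (v := Mz p' q' r')) hG hE.
apply: IH => //; exact: (meas hm).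
Qed.

Lemma descent (n : nat) : forall p q r : int, r - q <= n%:Z -> q <= 0 -> 0 <= r ->
  p * p + q * r = 0 -> Prim p q r -> Orb (Mz p q r).
Proof.
elim: n => [|n IH] p q r Hm Hq Hr Hd HP.
  have [q0|qn] := eqVneq q 0; first by apply: base_case => //; left.
  have [r0|rn] := eqVneq r 0; first by apply: base_case => //; right.
  have hq : q < 0 by rewrite lt_neqAle qn.
  have hr : 0 < r by rewrite lt_neqAle eq_sym rn.
  have : 0 < r - q by rewrite addr_gt0 // oppr_gt0.
  by rewrite ltNge Hm.
have [q0|qn] := eqVneq q 0; first by apply: base_case => //; left.
have [r0|rn] := eqVneq r 0; first by apply: base_case => //; right.
have hq : q < 0 by rewrite lt_neqAle qn.
have hr : 0 < r by rewrite lt_neqAle eq_sym rn.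
have hq' : 0 < - q by rewrite oppr_gt0.
have [p0|pn] := eqVneq p 0.
  by move: Hd; rewrite p0 mul0r add0r => /eqP; rewrite mulf_eq0 (negbTE qn) (negbTE rn).
have [hp|hp] := boolP (p < 0).
  have hp' : 0 < - p by rewrite oppr_gt0.
  have [hrq|hrq] := lerP r (- q).
  -
    have hrp : r <= - p by apply: (ineq (y := - q)) => //; apply: (eq_by _ Hd); iring.
    apply: (step (p' := p + r) (q' := q - p - p - r) (r' := r) (h := exp_ad zs) IH) => //.
    + apply: (lt_by (A := - p - r) (B := - p)) => //; first by iring.
      by rewrite subr_ge0.
    + apply: (le0_by (R := r) (S := p + r)) => //; apply: (eq_byN _ Hd); iring.
    + by rewrite -Hd; iring.
    + move=> k h1 h2 h3; apply: HP.
      * have -> : p = 1 * (p + r) + 0 * (q - p - p - r) + (-1) * r by iring.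
        exact: dvdz_lin.
      * have -> : q = (1 + 1) * (p + r) + 1 * (q - p - p - r) + (-1) * r by iring.
        exact: dvdz_lin.
      * have -> : r = 0 * (p + r) + 0 * (q - p - p - r) + 1 * r by iring.
        exact: dvdz_lin.
    + exact: Ggen_z.
    + rewrite exp_ad_z ?H2 // /Mz /phiZ /phi; icast3; rewrite ?z0 ?z1; mxring3.
  -
    have hqp : - q <= - p.
      by apply: (ineq (y := r)) => //; [exact: ltW | apply: (eq_by _ Hd); iring].
    apply: (step (p' := p - q) (q' := q) (r' := r + p + p - q) (h := phiZ 1 0 (-1) 1) IH) => //.
    + apply: (lt_by (A := - p + q) (B := - p)) => //; first by iring.
      by rewrite addrC subr_ge0 -lerN2.
    + apply: (ge0_by (Q := - q) (S := p - q)) => //; apply: (eq_byN _ Hd); iring.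
    + by rewrite -Hd; iring.
    + move=> k h1 h2 h3; apply: HP.
      * have -> : p = 1 * (p - q) + 1 * q + 0 * (r + p + p - q) by iring.
        exact: dvdz_lin.
      * have -> : q = 0 * (p - q) + 1 * q + 0 * (r + p + p - q) by iring.
        exact: dvdz_lin.
      * have -> : r = (-1 - 1) * (p - q) + (-1) * q + 1 * (r + p + p - q) by iring.
        exact: dvdz_lin.
    + exact: G_Yi.
    + rewrite /Mz /phiZ /phi; icast3; rewrite ?z0 ?z1; mxring3.
have {}hp : 0 < p by rewrite lt_neqAle eq_sym pn leNgt.
have [hrq|hrq] := lerP r (- q).
-
  have hrp : r <= p by apply: (ineq (y := - q)) => //; apply: (eq_by _ Hd); iring.
  apply: (step (p' := p - r) (q' := q + p + p - r) (r' := r) (h := phiZ 1 1 0 1) IH) => //.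
  + apply: (lt_by (A := p - r) (B := p)) => //; first by iring.
    by rewrite subr_ge0.
  + apply: (le0_by (R := r) (S := p - r)) => //; apply: (eq_byN _ Hd); iring.
  + by rewrite -Hd; iring.
  + move=> k h1 h2 h3; apply: HP.
    * have -> : p = 1 * (p - r) + 0 * (q + p + p - r) + 1 * r by iring.
      exact: dvdz_lin.
    * have -> : q = (-1 - 1) * (p - r) + 1 * (q + p + p - r) + (-1) * r by iring.
      exact: dvdz_lin.
    * have -> : r = 0 * (p - r) + 0 * (q + p + p - r) + 1 * r by iring.
      exact: dvdz_lin.
  + exact: G_Zi.
  + rewrite /Mz /phiZ /phi; icast3; rewrite ?z0 ?z1; mxring3.
-
  have hqp : - q <= p.
    by apply: (ineq (y := r)) => //; [exact: ltW | apply: (eq_by _ Hd); iring].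
  apply: (step (p' := p + q) (q' := q) (r' := r - p - p - q) (h := exp_ad ys) IH) => //.
  + apply: (lt_by (A := p + q) (B := p)) => //; first by iring.
    by rewrite -(opprK q) subr_ge0.
  + apply: (ge0_by (Q := - q) (S := p + q)) => //; apply: (eq_byN _ Hd); iring.
  + by rewrite -Hd; iring.
  + move=> k h1 h2 h3; apply: HP.
    * have -> : p = 1 * (p + q) + (-1) * q + 0 * (r - p - p - q) by iring.
      exact: dvdz_lin.
    * have -> : q = 0 * (p + q) + 1 * q + 0 * (r - p - p - q) by iring.
      exact: dvdz_lin.
    * have -> : r = (1 + 1) * (p + q) + (-1) * q + 1 * (r - p - p - q) by iring.
      exact: dvdz_lin.
  + exact: Ggen_y.
  + rewrite exp_ad_y ?H2 // /Mz /phiZ /phi; icast3; rewrite ?z0 ?z1; mxring3.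
Qed.
End S3.


Section S4.
Variable F : fieldType.
Variable charF0 : [pchar F] =i pred0.
Add Ring Fr4 : (@RT F).
Ltac fring4 := repeat match goal with |- context [@intmul ?R ?one ?n] => let x := fresh "x" in generalize (@intmul R one n : (FT F)) => x end; rewrite ?faddE ?fmulE ?foppE ?f0E ?f1E; match goal with |- ?a = ?b => change (@eq (FT F) a b) end; ring.
Ltac mxsimp4 := repeat (rewrite mx2_mul || rewrite mx2_add || rewrite mx2_opp || rewrite mx2_scale || rewrite mx2_tr).
Ltac mxring4 := mxsimp4; apply: mx2_eq; fring4.
Ltac eta4 u := rewrite [u]mx2_eta.
Ltac icast4 := repeat (rewrite intrD || rewrite intrN || rewrite intrM).
Notation mx2 := (@mx2 F).
Notation phi := (@phi F).
Notation phiZ := (@phiZ F).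
Notation Mz := (@Mz F).
Notation xs := (@xs F). Notation ys := (@ys F). Notation zs := (@zs F).
Notation Orb := (orbit_zs (@Ggen F)).
Notation sl2 := (@sl2 F). Notation Lstar := (@Lstar F).

Lemma in_S p q r : p * p + q * r = 0 -> Prim p q r -> Orb (Mz p q r) \/ Orb (- Mz p q r).
Proof.
move=> hd hP.
have hqr : q * r <= 0.
  have -> : q * r = - (p * p) by apply: (eq_by _ hd); iring.
  by rewrite oppr_le0; have := sqr_ge0 p; rewrite expr2.
have [[hq hr]|[hq hr]] : (q <= 0 /\ 0 <= r) \/ (0 <= q /\ r <= 0).
  case: (boolP (q <= 0)) => hq; case: (boolP (0 <= r)) => hr.
  - by left.
  - right; rewrite -ltNge in hr; split; last exact: ltW.
    by rewrite -(nmulr_lle0 _ hr).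
  - right; rewrite -ltNge in hq; split; first exact: ltW.
    by rewrite -(pmulr_rle0 _ hq).
  - right; rewrite -ltNge in hq; split; first exact: ltW.
    by rewrite -(pmulr_rle0 _ hq).
  left; apply: (descent charF0 (n := `|r - q|%N)) => //; rewrite abszE; exact: ler_norm.
right.
have -> : - Mz p q r = Mz (- p) (- q) (- r).
  by rewrite /Mz mx2_opp; apply: mx2_eq; rewrite !intrN ?opprK.
apply: (descent charF0 (n := `|- r - - q|%N)) => //.
- by rewrite abszE; exact: ler_norm.
- by rewrite oppr_le0.
- by rewrite oppr_ge0.
- by rewrite !mulrNN.
- by move=> k h1 h2 h3; apply: hP; rewrite -rpredN.
Qed.

Lemma sl2_0 : sl2 (0 : 'M[F]_2). Proof. by rewrite /sl2 mxtrace0. Qed.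
Lemma sl2_zs : sl2 zs. Proof. by rewrite /sl2 /zs mx2_tr addr0. Qed.
Lemma Lstar_sl2 w : Lstar w -> sl2 w.
Proof. by case/LstarE=> p [q [r ->]]; rewrite /sl2 mx2_tr intrN subrr. Qed.
Lemma Lstar_zs : Lstar zs.
Proof. apply/LstarE; exists 0, (-1), 0; by rewrite /zs; apply: mx2_eq => //; rewrite intrN. Qed.
Lemma lin0 (ph : 'M[F]_2 -> 'M[F]_2) : lin_bij_sl2 ph -> ph 0 = 0.
Proof.
case=> _ [Hl _]; have := Hl 1 0 0 sl2_0 sl2_0.
rewrite !scale1r addr0 -{1}[ph 0]addr0 => /addrI E.
by rewrite -E.
Qed.
Lemma linZ (ph : 'M[F]_2 -> 'M[F]_2) k w : lin_bij_sl2 ph -> sl2 w -> ph (k *: w) = k *: ph w.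
Proof.
move=> H Hw; have := (H.2.1 k w 0 Hw sl2_0).
by rewrite (lin0 H) !addr0.
Qed.

Lemma from_phi (ph : 'M[F]_2 -> 'M[F]_2) : lin_bij_sl2 ph -> preserves_Lstar ph ->
  (forall P Q R : F, ph zs = mx2 P Q R (- P) -> P * P + Q * R = 0) ->
  Orb (ph zs) \/ Orb (- ph zs).
Proof.
move=> Hb [HL HL'] Hdelta.
have [p [q [r Eu]]] := (LstarE _).1 (HL _ Lstar_zs).
have hd : p * p + q * r = 0.
  apply: (intr0 charF0); rewrite intrD !intrM; apply: Hdelta.
  by rewrite Eu intrN.
have Eu' : ph zs = Mz p q r by [].
rewrite Eu'; apply: in_S => // k hp hq hr.
pose w := Mz (p %/ k)%Z (q %/ k)%Z (r %/ k)%Z.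
have Lw : Lstar w by apply/LstarE; exists (p %/ k)%Z, (q %/ k)%Z, (r %/ k)%Z.
have Euw : ph zs = k%:~R *: w.
  rewrite Eu /w /Mz mx2_scale; apply: mx2_eq; rewrite -intrM.
  - by rewrite mulrC divzK.
  - by rewrite mulrC divzK.
  - by rewrite mulrC divzK.
  - by rewrite mulrN mulrC divzK.
have [w' Lw' Ew'] := HL' _ Lw.
have Hkw : k%:~R *: w' = zs.
  apply: Hb.2.2.1.
  - by rewrite /sl2 mxtraceZ (Lstar_sl2 Lw') mulr0.
  - exact: sl2_zs.
  - by rewrite linZ //; [rewrite Ew' -Euw | exact: Lstar_sl2].
have [p' [q' [r' Ew'']]] := (LstarE _).1 Lw'.
move: Hkw; rewrite Ew'' /zs mx2_scale => /mx2_inj [_ E2 _ _].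
have E3 : k * q' = -1 by apply: (intr_inj charF0); rewrite intrM E2 intrN.
have : (k %| k * q')%Z by exact: dvdz_mulr (dvdzz k).
by rewrite E3 rpredN.
Qed.

Notation lie := (@lie F).
Lemma lie_sl2 a b : sl2 (lie a b).
Proof. eta4 a; eta4 b; rewrite /sl2 /lie; mxsimp4; fring4. Qed.
Lemma ad_z3 w : lie zs (lie zs (lie zs w)) = 0.
Proof. eta4 w; rewrite /zs /lie mx2_0; mxring4. Qed.
Lemma lieN a b : lie a b = - lie b a.
Proof. by rewrite /lie opprB. Qed.
Lemma lieNr a b : lie a (- b) = - lie a b.
Proof. by rewrite /lie mulrN mulNr opprK opprB addrC. Qed.

Lemma nil3 (ph : 'M[F]_2 -> 'M[F]_2) u : is_aut ph \/ is_antiaut ph -> ph zs = u ->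
  forall v, sl2 v -> lie u (lie u (lie u v)) = 0.
Proof.
move=> Hph <- v Hv.
have Hb : lin_bij_sl2 ph by case: Hph => [[]|[]].
have [w Hw <-] := Hb.2.2.2 v Hv.
have Hz := sl2_zs.
case: Hph => [[_ Hl]|[_ Hl]].
  have s1 := lie_sl2 zs w; have s2 := lie_sl2 zs (lie zs w).
  rewrite -(Hl _ _ Hz Hw) -(Hl _ _ Hz s1) -(Hl _ _ Hz s2) ad_z3.
  exact: (lin0 Hb).
have Hl' : forall a b, sl2 a -> sl2 b -> lie (ph a) (ph b) = - ph (lie a b).
  by move=> a b Ha Hb'; rewrite Hl // lieN.
have s1 := lie_sl2 zs w; have s2 := lie_sl2 zs (lie zs w).
rewrite (Hl' _ _ Hz Hw) lieNr lieNr (Hl' _ _ Hz s1) lieNr opprK (Hl' _ _ Hz s2) ad_z3 (lin0 Hb).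
by rewrite oppr0.
Qed.

Lemma e8E : (8%:R : F) = 1 + 1 + 1 + 1 + 1 + 1 + 1 + 1.
Proof. by rewrite !mulrSr mulr0n add0r. Qed.
Lemma e8_neq0 : (1 + 1 + 1 + 1 + 1 + 1 + 1 + 1 : F) != 0.
Proof. by rewrite -e8E ((pcharf0P F).1 charF0). Qed.
Lemma e2E : (2%:R : F) = 1 + 1.
Proof. by rewrite !mulrSr mulr0n add0r. Qed.

Lemma delta_nil (P Q R : F) :
  (forall v, sl2 v -> lie (mx2 P Q R (- P)) (lie (mx2 P Q R (- P)) (lie (mx2 P Q R (- P)) v)) = 0) ->
  P * P + Q * R = 0.
Proof.
move=> Hn.
set d := P * P + Q * R.
set e8 := (1 + 1 + 1 + 1 + 1 + 1 + 1 + 1 : F).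
have h8 : e8 != 0 by exact: e8_neq0.
have E1 : lie (mx2 P Q R (- P)) (lie (mx2 P Q R (- P)) (lie (mx2 P Q R (- P)) (mx2 1 0 0 (-1))))
   = mx2 0 (- (e8 * (d * Q))) (e8 * (d * R)) 0.
  rewrite /lie /e8 /d; mxring4.
have E2 : lie (mx2 P Q R (- P)) (lie (mx2 P Q R (- P)) (lie (mx2 P Q R (- P)) ys))
   = mx2 ((1 + 1 + 1 + 1) * (d * Q)) 0 (- (e8 * (d * P))) (- ((1 + 1 + 1 + 1) * (d * Q))).
  rewrite /ys /lie /e8 /d; mxring4.
have Hh : sl2 (mx2 1 0 0 (-1)) by rewrite /sl2 mx2_tr subrr.
have Hy : sl2 ys by rewrite /sl2 /ys mx2_tr addr0.
have Z1 := Hn _ Hh; rewrite E1 mx2_0 in Z1; case/mx2_inj: Z1 => _ hQ hR _.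
have Z2 := Hn _ Hy; rewrite E2 mx2_0 in Z2; case/mx2_inj: Z2 => _ _ hP _.
have dQ : d * Q = 0.
  by move/eqP: hQ; rewrite oppr_eq0 mulf_eq0 (negbTE h8) /= => /eqP.
have dR : d * R = 0.
  by move/eqP: hR; rewrite mulf_eq0 (negbTE h8) /= => /eqP.
have dP : d * P = 0.
  by move/eqP: hP; rewrite oppr_eq0 mulf_eq0 (negbTE h8) /= => /eqP.
have : d * d = 0.
  by rewrite {2}/d mulrDr !mulrA dP dQ !mul0r addr0.
by move/eqP; rewrite mulf_eq0 orbb => /eqP.
Qed.

Lemma delta_isom (P Q R : F) :
  \tr (mx2 P Q R (- P) * mx2 P Q R (- P)) = 0 -> P * P + Q * R = 0.
Proof.
mxsimp4 => E.
have E' : (P * P + Q * R) * (1 + 1) = 0 by rewrite -E; fring4.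
move/eqP: E'; rewrite mulf_eq0 -e2E ((pcharf0P F).1 charF0) orbF.
by move/eqP.
Qed.

Lemma phiZ_neg a b c d : phiZ a (-b) c (-d) zs = - phiZ a b c d zs.
Proof. rewrite !phiZ_zs; icast4; mxring4. Qed.

Lemma S_sub u : Orb u \/ Orb (- u) ->
  exists a b c d : int, (a * d - b * c) * (a * d - b * c) = 1 /\ phiZ a b c d zs = u.
Proof.
have H2 := two_neq0 charF0.
case=> [[g Hg gu]|[g Hg gu]].
  have [a [b [c [d [Hd Eg]]]]] := Ggen_phi H2 Hg.
  exists a, b, c, d; split; first by rewrite Hd mulr1.
  by rewrite -gu (Eg _ sl2_zs).
have [a [b [c [d [Hd Eg]]]]] := Ggen_phi H2 Hg.
exists a, (-b), c, (-d); split.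
  have -> : (a * - d - - b * c) * (a * - d - - b * c) = (a * d - b * c) * (a * d - b * c) by iring.
  by rewrite Hd mulr1.
by rewrite phiZ_neg -(Eg _ sl2_zs) gu opprK.
Qed.
End S4.

Unset Implicit Arguments.
Theorem theorem6p10 (F : fieldType) (charF0 : [pchar F] =i pred0) :
  (forall u : 'M[F]_2, ~ (orbit_zs (@Ggen F) u /\ orbit_zs (@Ggen F) (- u))) /\
  (forall u : 'M[F]_2,
     ((orbit_zs (@Ggen F) u \/ orbit_zs (@Ggen F) (- u)) <-> orbit_zs (@AutZ F) u) /\
     (orbit_zs (@AutZ F) u <-> orbit_zs (@AAutZ F) u) /\
     (orbit_zs (@AAutZ F) u <-> orbit_zs (@IsomZ F) u)).
Proof.
split; first exact: part1 charF0.
move=> u.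
have S2Aut : (orbit_zs (@Ggen F) u \/ orbit_zs (@Ggen F) (- u)) -> orbit_zs (@AutZ F) u.
  move/(S_sub charF0) => [a [b [c [d [H E]]]]].
  exists (phiZ a b c d) => //; split; [exact: phiZ_aut | exact: phiZ_pres].
have S2Isom : (orbit_zs (@Ggen F) u \/ orbit_zs (@Ggen F) (- u)) -> orbit_zs (@IsomZ F) u.
  move/(S_sub charF0) => [a [b [c [d [H E]]]]].
  exists (phiZ a b c d) => //; split; [exact: phiZ_isom | exact: phiZ_pres].
have Aut2AAut : orbit_zs (@AutZ F) u -> orbit_zs (@AAutZ F) u.
  by case=> ph [Ha Hp] E; exists ph => //; split => //; left.
have AAut2S : orbit_zs (@AAutZ F) u -> (orbit_zs (@Ggen F) u \/ orbit_zs (@Ggen F) (- u)).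
  case=> ph [Hph Hp] <-.
  have Hb : lin_bij_sl2 ph by case: Hph => [[]|[]].
  apply: (from_phi charF0 Hb Hp) => P Q R E.
  apply: (delta_nil charF0) => v Hv; rewrite -E.
  exact: (nil3 Hph erefl).
have Isom2S : orbit_zs (@IsomZ F) u -> (orbit_zs (@Ggen F) u \/ orbit_zs (@Ggen F) (- u)).
  case=> ph [[Hb Htr] Hp] <-.
  apply: (from_phi charF0 Hb Hp) => P Q R E.
  apply: (delta_isom charF0); rewrite -E (Htr _ _ (sl2_zs F) (sl2_zs F)).
  by rewrite zs2 mxtrace0.
split; first by split; [exact: S2Aut | move=> /Aut2AAut /AAut2S].
split; first by split; [exact: Aut2AAut | move=> /AAut2S /S2Aut].
split; [move=> /AAut2S /S2Isom // | move=> /Isom2S /S2Aut /Aut2AAut //].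
Qed.
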